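(* Let $V(r)=r\coth r-\log|2\sinh r|$ for $r>0$ and $V_{\mathrm{eff}}(x):=\sum_{k=1}^\infty V(kx)$ for $x>0$. For every $C>0$ there exists $\alpha_0>0$ such that for every $x>0$: if $\sup_{\alpha>\alpha_0}\big[C\,V_{\mathrm{eff}}(\alpha/C)-V(\alpha x)\big]>0$, then $x\ge\frac1{4C}$. *)

(* Defs.v *)
From Stdlib Require Import Reals ClassicalEpsilon.
Open Scope R_scope.

Definition coth (r : R) : R := cosh r / sinh r.

Definition V (r : R) : R := r * coth r - ln (Rabs (2 * sinh r)).

(* V_eff(x) = sum_{k>=1} V(k x), as the value of the (convergent for x>0)
   series; chosen by Hilbert's epsilon, which picks the unique limit. *)
Definition Veff (x : R) : R :=
  epsilon (inhabits 0) (fun l => infinite_sum (fun k => V (INR (S k) * x)) l).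

(* Main.v *)
Require Import Defs.
From Stdlib Require Import Reals Lra ClassicalEpsilon.
Open Scope R_scope.

Lemma exp_mul_nat (n : nat) (y : R) : exp (INR n * y) = exp y ^ n.
Proof.
  induction n as [|n IH].
  - simpl. rewrite Rmult_0_l. apply exp_0.
  - rewrite S_INR. replace ((INR n + 1) * y) with (INR n * y + y) by ring.
    rewrite exp_plus, IH. simpl. ring.
Qed.

Lemma V_form (r : R) : 0 < r ->
  V r = 2 * r * exp (-2*r) / (1 - exp (-2*r)) - ln (1 - exp (-2*r)).
Proof.
  intro hr.
  assert (ha : 0 < exp r) by apply exp_pos.
  assert (hb : exp (-r) = exp r * exp (-2*r)).
  { rewrite <- exp_plus. f_equal. ring. }
  assert (ht : exp (-2*r) < 1).
  { rewrite <- exp_0. apply exp_increasing. lra. }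
  assert (ht0 : 0 < exp (-2*r)) by apply exp_pos.
  unfold V, coth, sinh, cosh.
  replace (2 * ((exp r - exp (- r)) / 2)) with (exp r * (1 - exp (-2*r)))
    by (rewrite hb; field).
  rewrite Rabs_right by (apply Rle_ge; apply Rmult_le_pos; lra).
  rewrite ln_mult by lra. rewrite ln_exp. rewrite hb.
  assert (0 < exp r * (1 - exp (-2*r))) by (apply Rmult_lt_0_compat; lra).
  field. split; nra.
Qed.

Lemma ln_upper (u : R) : 0 < u -> ln u <= u - 1.
Proof.
  intro hu. destruct (Rle_or_lt (ln u) (u - 1)) as [h|h]; auto.
  exfalso. apply exp_increasing in h. rewrite exp_ln in h by lra.
  pose proof (exp_ineq1_le (u - 1)). lra.
Qed.

Lemma V_lower (r : R) : 0 < r -> exp (-2*r) <= V r.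
Proof.
  intro hr. rewrite V_form by lra.
  set (t := exp (-2*r)).
  assert (ht : t < 1) by (unfold t; rewrite <- exp_0; apply exp_increasing; lra).
  assert (ht0 : 0 < t) by apply exp_pos.
  assert (h1 : 0 <= 2 * r * t / (1 - t)).
  { unfold Rdiv. apply Rmult_le_pos. nra. left; apply Rinv_0_lt_compat; lra. }
  assert (h2 : ln (1 - t) <= - t).
  { destruct (Rle_or_lt (ln (1 - t)) (- t)) as [h|h]; auto.
    exfalso. apply exp_increasing in h. rewrite exp_ln in h by lra.
    pose proof (exp_ineq1_le (- t)). lra. }
  lra.
Qed.

Lemma V_upper (r : R) : 4 <= r -> V r <= 2 * exp (- r).
Proof.
  intro hr. rewrite V_form by lra.
  set (b := exp (- r)).
  assert (hb0 : 0 < b) by apply exp_pos.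
  assert (ht : exp (-2*r) = b * b).
  { unfold b. rewrite <- exp_plus. f_equal. ring. }
  rewrite ht.
  assert (hE : 2 * r + 1 <= exp r).
  { replace r with (r/2 + r/2) at 2 by field. rewrite exp_plus.
    pose proof (exp_ineq1_le (r/2)). nra. }
  assert (hbe : b * exp r = 1).
  { unfold b. rewrite <- exp_plus. replace (-r + r) with 0 by ring. apply exp_0. }
  assert (hb1 : (2*r+1) * b <= 1) by nra.
  assert (hb9 : b <= 1/9) by nra.
  assert (hlt : b * b < 1) by nra.
  assert (hl : - ln (1 - b * b) <= b * b / (1 - b * b)).
  { rewrite <- ln_Rinv by lra.
    pose proof (ln_upper (/ (1 - b*b))) as H.
    assert (0 < / (1 - b*b)) by (apply Rinv_0_lt_compat; lra).
    specialize (H ltac:(lra)).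
    replace (b * b / (1 - b * b)) with (/ (1 - b*b) - 1) by (field; lra). lra. }
  assert (hm : 2 * r * (b * b) / (1 - b * b) + b * b / (1 - b * b) <= 2 * b).
  { replace (2 * r * (b * b) / (1 - b * b) + b * b / (1 - b * b))
      with ((2*r+1) * b * b / (1 - b*b)) by (field; lra).
    apply (Rmult_le_reg_r (1 - b*b)). lra.
    unfold Rdiv. rewrite Rmult_assoc, Rinv_l by lra. nra. }
  lra.
Qed.

Lemma Veff_bound (y : R) : 4 <= y -> Veff y <= 4 * exp (- y).
Proof.
  intro hy.
  set (q := exp (- y)).
  assert (hq0 : 0 < q) by apply exp_pos.
  assert (hq : q <= 1/2).
  { assert (hbe : q * exp y = 1).
    { unfold q. rewrite <- exp_plus. replace (-y + y) with 0 by ring. apply exp_0. }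
    pose proof (exp_ineq1_le y). nra. }
  set (An := fun k : nat => V (INR (S k) * y)).
  assert (hA : forall k, 0 <= An k <= 2 * q ^ (S k)).
  { intro k. unfold An.
    assert (hk : 1 <= INR (S k)) by (rewrite S_INR; pose proof (pos_INR k); lra).
    assert (hr : 4 <= INR (S k) * y) by nra.
    split.
    - pose proof (V_lower (INR (S k) * y) ltac:(lra)). pose proof (exp_pos (-2 * (INR (S k) * y))). lra.
    - pose proof (V_upper _ hr) as H.
      replace (- (INR (S k) * y)) with (INR (S k) * (- y)) in H by ring.
      rewrite exp_mul_nat in H. exact H. }
  assert (hS : forall n, sum_f_R0 An n <= 2 * q * (1 - q ^ (S n)) / (1 - q)).
  { induction n as [|n IH].
    - simpl. specialize (hA O). simpl in hA.
      replace (2 * q * (1 - q * 1) / (1 - q)) with (2 * q) by (field; lra). lra.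
    - simpl sum_f_R0. specialize (hA (S n)).
      replace (2 * q * (1 - q ^ S (S n)) / (1 - q))
        with (2 * q * (1 - q ^ S n) / (1 - q) + 2 * q ^ S (S n)) by (simpl; field; lra).
      lra. }
  assert (hB : forall n, sum_f_R0 An n <= 4 * q).
  { intro n. specialize (hS n). assert (0 < q ^ S n) by (apply pow_lt; lra).
    assert (2 * q * (1 - q ^ S n) / (1 - q) <= 4 * q).
    { apply (Rmult_le_reg_r (1 - q)). lra.
      unfold Rdiv. rewrite Rmult_assoc, Rinv_l by lra. nra. }
    lra. }
  assert (hg : Un_growing (sum_f_R0 An)).
  { intro n. simpl. specialize (hA (S n)). lra. }
  assert (hub : has_ub (sum_f_R0 An)).
  { exists (4 * q). intros z [i ->]. apply hB. }
  destruct (growing_cv _ hg hub) as [l hl].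
  assert (hVe : Veff y = l).
  { unfold Veff.
    assert (HP : exists l0, infinite_sum (fun k => V (INR (S k) * y)) l0) by (exists l; exact hl).
    pose proof (epsilon_spec (inhabits 0) _ HP) as He.
    eapply UL_sequence; [exact He| exact hl]. }
  rewrite hVe.
  assert (hc : Un_cv (fun _ : nat => 4 * q) (4 * q)).
  { intros e he. exists O. intros n _. unfold Rdist. rewrite Rminus_diag, Rabs_R0. lra. }
  exact (Rle_cv_lim hB hl hc).
Qed.

Theorem mainTheorem8 :
  forall C : R, 0 < C ->
  exists alpha0 : R, 0 < alpha0 /\
    forall x : R, 0 < x ->
      (exists alpha : R, alpha0 < alpha /\ C * Veff (alpha / C) - V (alpha * x) > 0) ->
      x >= 1 / (4 * C).
Proof.
  intros C hC. exists (C * (4 + 8 * C)). split; [nra|].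
  intros x hx [alpha [ha H]].
  destruct (Rge_or_lt x (1 / (4 * C))) as [h|h]; auto. exfalso.
  set (y := alpha / C) in *.
  assert (hy : alpha = C * y) by (unfold y; field; lra).
  assert (hy8 : 4 + 8 * C < y) by nra.
  assert (hx4 : 4 * C * x < 1).
  { apply (Rmult_lt_compat_l (4 * C)) in h; [|lra].
    replace (4 * C * (1 / (4 * C))) with 1 in h by (field; lra). lra. }
  assert (hax : 2 * (alpha * x) < y / 2) by (rewrite hy; nra).
  pose proof (Veff_bound y ltac:(lra)) as hVe.
  assert (halpha : 0 < alpha * x) by nra.
  pose proof (V_lower _ halpha) as hVl.
  assert (h1 : exp (- (y / 2)) < exp (-2 * (alpha * x))) by (apply exp_increasing; lra).
  assert (h2 : exp (- (y/2)) = exp (y/2) * exp (- y)).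
  { rewrite <- exp_plus. f_equal. field. }
  pose proof (exp_ineq1_le (y/2)).
  pose proof (exp_pos (- y)).
  assert (4 * C * exp (- y) <= exp (y/2) * exp (- y)) by nra.
  nra.
Qed.
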